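(* Let $N\ge 1$, $m\ge1$ and $m_1,\dots,m_N\ge 1$ be integers. For $t=1,\dots,N$ let $D^{(t)}\in\mathbb{R}^{m\times m_t}$ be given matrices, and let $\bm{a}^{(t)}\in\mathbb{R}^{m_t}$ satisfy $\bm{a}^{(t)}\ge 0$ and $\bm{e}_{m_t}^\top\bm{a}^{(t)}=1$. Consider the primal problem $$(\mathrm{P})\quad \min_{\bm{w}\in\mathbb{R}^m,\,\Pi^{(t)}\in\mathbb{R}^{m\times m_t}}\ \delta_{\Delta_m}(\bm{w})+\sum_{t=1}^N\delta^t_+(\Pi^{(t)})+\sum_{t=1}^N\langle D^{(t)},\Pi^{(t)}\rangle\quad\text{s.t.}\quad \Pi^{(t)}\bm{e}_{m_t}=\bm{w},\ (\Pi^{(t)})^\top\bm{e}_m=\bm{a}^{(t)},\ t=1,\dots,N,$$ and the dual-type problem $$(\mathrm{D})\quad \min_{\bm{u}\in\mathbb{R}^m,\,V^{(t)}\in\mathbb{R}^{m\times m_t},\,\bm{y}^{(t)}\in\mathbb{R}^m,\,\bm{z}^{(t)}\in\mathbb{R}^{m_t}}\ \delta^*_{\Delta_m}(\bm{u})+\sum_{t=1}^N\delta^t_+(V^{(t)})+\sum_{t=1}^N\langle\bm{z}^{(t)},\bm{a}^{(t)}\rangle$$ $$\text{s.t.}\quad \sum_{t=1}^N\bm{y}^{(t)}-\bm{u}=0,\qquad V^{(t)}-D^{(t)}-\bm{y}^{(t)}\bm{e}_{m_t}^\top-\bm{e}_m(\bm{z}^{(t)})^\top=0,\ t=1,\dots,N.$$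 Consider the KKT system for (P) in the unknowns $(\bm{w},\{\Pi^{(t)}\},\{\bm{y}^{(t)}\},\{\bm{z}^{(t)}\})$: $$0\in\partial\delta_{\Delta_m}(\bm{w})-\sum_{t=1}^N\bm{y}^{(t)},\quad 0\in\partial\delta^t_+(\Pi^{(t)})+D^{(t)}+\bm{y}^{(t)}\bm{e}_{m_t}^\top+\bm{e}_m(\bm{z}^{(t)})^\top,\quad \Pi^{(t)}\bm{e}_{m_t}=\bm{w},\quad (\Pi^{(t)})^\top\bm{e}_m=\bm{a}^{(t)}\quad(\forall t),$$ and the KKT system for (D) in the unknowns $(\bm{u},\{V^{(t)}\},\{\bm{y}^{(t)}\},\{\bm{z}^{(t)}\},\bm{\lambda},\{\Lambda^{(t)}\})$ with $\bm{\lambda}\in\mathbb{R}^m$, $\Lambda^{(t)}\in\mathbb{R}^{m\times m_t}$: $$0\in\partial\delta^*_{\Delta_m}(\bm{u})-\bm{\lambda},\quad 0\in\partial\delta^t_+(V^{(t)})+\Lambda^{(t)},\quad \Lambda^{(t)}\bm{e}_{m_t}=\bm{\lambda},\quad (\Lambda^{(t)})^\top\bm{e}_m=\bm{a}^{(t)},$$ $$\sum_{t=1}^N\bm{y}^{(t)}-\bm{u}=0,\quad V^{(t)}-D^{(t)}-\bm{y}^{(t)}\bm{e}_{m_t}^\top-\bm{e}_m(\bm{z}^{(t)})^\top=0\quad(\forall t).$$ Then: (i) (P) has an optimal solution and the solution set of the KKT system for (P) is nonempty; (ii) (D) has an optimal solution and the solution set of the KKT system for (D) is nonempty; (iii) if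 $(\bm{u}^*,\{V^{(t),*}\},\{\bm{y}^{(t),*}\},\{\bm{z}^{(t),*}\},\bm{\lambda}^*,\{\Lambda^{(t),*}\})$ solves the KKT system for (D), then $(\bm{u}^*,\{V^{(t),*}\},\{\bm{y}^{(t),*}\},\{\bm{z}^{(t),*}\})$ is an optimal solution of (D) and $(\bm{\lambda}^*,\{\Lambda^{(t),*}\})$ (as $(\bm{w},\{\Pi^{(t)}\})$) is an optimal solution of (P).
   Context: $\bm{e}_k$ denotes the all-ones vector in $\mathbb{R}^k$. $\Delta_m=\{\bm{w}\in\mathbb{R}^m:\bm{e}_m^\top\bm{w}=1,\ \bm{w}\ge0\}$ is the unit simplex; $\delta_{\Delta_m}$ is its indicator function (0 on $\Delta_m$, $+\infty$ outside) and $\delta^*_{\Delta_m}$ its convex conjugate, $\delta^*_{\Delta_m}(\bm{u})=\max_i u_i$. $\delta^t_+$ is the indicator function of the nonnegative orthant $\{\Pi\in\mathbb{R}^{m\times m_t}:\Pi\ge0\}$ (entrywise). $\partial$ denotes the convex subdifferential and $\langle X,Y\rangle=\sum_{ij}x_{ij}y_{ij}$. *)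

(* Defs.v *)
From HB Require Import structures.
From mathcomp Require Import all_boot all_order all_algebra.
From mathcomp Require Import boolp classical_sets reals constructive_ereal ereal.
Set Implicit Arguments. Unset Strict Implicit. Unset Printing Implicit Defensive.
Import Order.TTheory GRing.Theory Num.Theory.
Local Open Scope ring_scope.
Local Open Scope ereal_scope.

Section Defs.
Variable R : realType.

Definition ones (k : nat) : 'cV[R]_k := const_mx 1%R.

Definition mxdot (p q : nat) (X Y : 'M[R]_(p, q)) : R :=
  (\sum_(i < p) \sum_(j < q) X i j * Y i j)%R.

Definition indicator (p q : nat) (S : set 'M[R]_(p, q)) (X : 'M[R]_(p, q)) : \bar R :=
  if `[< S X >] then 0 else +oo.

Definition conjugate (p q : nat) (f : 'M[R]_(p, q) -> \bar R) (Y : 'M[R]_(p, q)) : \bar R :=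
  ereal_sup (range (fun X => (mxdot Y X)%:E - f X)).

Definition subdiff (p q : nat) (f : 'M[R]_(p, q) -> \bar R) (X : 'M[R]_(p, q)) :
  set 'M[R]_(p, q) :=
  [set G | f X \is a fin_num /\ forall Y, f X + (mxdot G (Y - X))%:E <= f Y].

Definition simplex (m : nat) : set 'cV[R]_m :=
  [set w | (\sum_(i < m) w i 0 = 1)%R /\ forall i, (0 <= w i 0)%R].

Definition nonneg (p q : nat) : set 'M[R]_(p, q) :=
  [set X | forall i j, (0 <= X i j)%R].

Definition delta_simplex (m : nat) := indicator (@simplex m).
Definition delta_plus (p q : nat) := indicator (@nonneg p q).
Definition delta_simplex_conj (m : nat) := conjugate (@delta_simplex m).

Variables (N m : nat) (ms : 'I_N -> nat)
  (D : forall t, 'M[R]_(m, ms t)) (a : forall t, 'cV[R]_(ms t)).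

Definition P_feasible (w : 'cV[R]_m) (Pi : forall t, 'M[R]_(m, ms t)) : Prop :=
  forall t, (Pi t *m ones (ms t) = w)%R /\ ((Pi t)^T *m ones m = a t)%R.

Definition P_obj (w : 'cV[R]_m) (Pi : forall t, 'M[R]_(m, ms t)) : \bar R :=
  delta_simplex w + \sum_(t < N) delta_plus (Pi t)
  + \sum_(t < N) (mxdot (D t) (Pi t))%:E.

Definition P_optimal w Pi : Prop :=
  P_feasible w Pi /\ P_obj w Pi \is a fin_num /\
  forall w' Pi', P_feasible w' Pi' -> P_obj w Pi <= P_obj w' Pi'.

Definition P_KKT (w : 'cV[R]_m) (Pi : forall t, 'M[R]_(m, ms t))
  (y : 'I_N -> 'cV[R]_m) (z : forall t, 'cV[R]_(ms t)) : Prop :=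
  (* 0 \in d delta_Delta(w) - sum_t y_t *)
  subdiff (@delta_simplex m) w (\sum_(t < N) y t)%R /\
  forall t,
    (* 0 \in d delta_+(Pi_t) + D_t + y_t e^T + e z_t^T *)
    subdiff (@delta_plus m (ms t)) (Pi t)
       (- (D t + y t *m (ones (ms t))^T + ones m *m (z t)^T))%R /\
    (Pi t *m ones (ms t) = w)%R /\ ((Pi t)^T *m ones m = a t)%R.

Definition D_feasible (u : 'cV[R]_m) (V : forall t, 'M[R]_(m, ms t))
  (y : 'I_N -> 'cV[R]_m) (z : forall t, 'cV[R]_(ms t)) : Prop :=
  (\sum_(t < N) y t - u = 0)%R /\
  forall t, (V t - D t - y t *m (ones (ms t))^T - ones m *m (z t)^T = 0)%R.

Definition D_obj (u : 'cV[R]_m) (V : forall t, 'M[R]_(m, ms t))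
  (z : forall t, 'cV[R]_(ms t)) : \bar R :=
  delta_simplex_conj u + \sum_(t < N) delta_plus (V t)
  + \sum_(t < N) (mxdot (z t) (a t))%:E.

Definition D_optimal u V y z : Prop :=
  D_feasible u V y z /\ D_obj u V z \is a fin_num /\
  forall u' V' y' z', D_feasible u' V' y' z' -> D_obj u V z <= D_obj u' V' z'.

Definition D_KKT (u : 'cV[R]_m) (V : forall t, 'M[R]_(m, ms t))
  (y : 'I_N -> 'cV[R]_m) (z : forall t, 'cV[R]_(ms t))
  (lam : 'cV[R]_m) (Lam : forall t, 'M[R]_(m, ms t)) : Prop :=
  (* 0 \in d delta*_Delta(u) - lam *)
  subdiff (@delta_simplex_conj m) u lam /\
  (\sum_(t < N) y t - u = 0)%R /\
  forall t,
    (* 0 \in d delta_+(V_t) + Lam_t *)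
    subdiff (@delta_plus m (ms t)) (V t) (- Lam t)%R /\
    (Lam t *m ones (ms t) = lam)%R /\ ((Lam t)^T *m ones m = a t)%R /\
    (V t - D t - y t *m (ones (ms t))^T - ones m *m (z t)^T = 0)%R.

End Defs.

(* Main.v *)
Require Import Defs.
From HB Require Import structures.
From mathcomp Require Import all_boot all_order all_algebra.
From mathcomp Require Import boolp classical_sets reals constructive_ereal ereal.
From mathcomp Require Import ring lra.
Set Implicit Arguments. Unset Strict Implicit. Unset Printing Implicit Defensive.
Import Order.TTheory GRing.Theory Num.Theory.
Local Open Scope ring_scope.

Section Farkas.
Variable R : realFieldType.

Lemma sumd (T : finType) (i : T) (F : T -> R) :
  \sum_(k : T) (k == i)%:R * F k = F i.
Proof.
rewrite (bigD1 i) //= eqxx mul1r big1 ?addr0 // => k /negbTE ->; by rewrite mul0r.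
Qed.

Lemma oneD (I : finType) (a s : I -> R) :
  (forall i, a i = 0 -> 0 <= s i) ->
  (forall i j, 0 < a i -> a j < 0 -> s j / a j <= s i / a i) ->
  exists t, forall i, a i * t <= s i.
Proof.
move=> H0 H1.
pose M : R := \sum_i `|s i / a i|.
have HM : forall i, - M <= s i / a i.
  move=> i; rewrite lerNl; apply: le_trans (ler_norm _) _.
  rewrite normrN /M (bigD1 i) //= lerDl; exact: sumr_ge0.
exists (\big[Num.max/ - M]_(j | a j < 0) (s j / a j)) => i.
case: (ltgtP (a i) 0) => ha.
- have : s i / a i <= \big[Num.max/ - M]_(j | a j < 0) (s j / a j).
    exact: (le_bigmax_cond _ (fun j => s j / a j) ha).
  rewrite -(ler_nM2l ha) mulrCA divff ?mulr1 //; exact: ltr0_neq0.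
- have : \big[Num.max/ - M]_(j | a j < 0) (s j / a j) <= s i / a i.
    apply: bigmax_le; first exact: HM.
    by move=> j hj; exact: H1.
  rewrite -(ler_pM2l ha) mulrCA divff ?mulr1 //; exact: lt0r_neq0.
- by rewrite ha mul0r; exact: H0.
Qed.

End Farkas.


Section Farkas.
Variable R : realFieldType.

Definition fk_concl (V I : finType) (A : I -> V -> R) (b : I -> R) :=
 (exists x : V -> R, forall i, \sum_u A i u * x u <= b i) \/
 (exists l : I -> R, (forall i, 0 <= l i) /\ (forall u, \sum_i l i * A i u = 0)
     /\ \sum_i l i * b i < 0).

Lemma farkas0 (V I : finType) (A : I -> V -> R) (b : I -> R) :
  (forall i u, A i u = 0) -> fk_concl A b.
Proof.
move=> HA.
case: (boolP [exists i, b i < 0]) => [/existsP [i hi]|/existsPn hn].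
  right; exists (fun k => (k == i)%:R); split; first by move=> k; exact: ler0n.
  split; first by move=> u; rewrite sumd.
  by rewrite sumd.
left; exists (fun _ => 0) => i.
rewrite big1; [by rewrite leNgt hn | by move=> u _; rewrite mulr0].
Qed.

Lemma ratio_le (ai aj ri rj bi bj : R) : 0 < ai -> aj < 0 ->
  - aj * ri + ai * rj <= - aj * bi + ai * bj ->
  (bj - rj) / aj <= (bi - ri) / ai.
Proof.
move=> hi hj h.
set p := (bi - ri) / ai; set q := (bj - rj) / aj.
have ep : bi - ri = p * ai by rewrite /p divfK // gt_eqF.
have eq' : bj - rj = q * aj by rewrite /q divfK // lt_eqF.
have h2 : 0 <= (ai * aj) * (q - p).
  have -> : (ai * aj) * (q - p) = - aj * (p * ai) + ai * (q * aj) by ring.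
  rewrite -ep -eq'; lra.
have hn : ai * aj < 0 by rewrite pmulr_rlt0.
by rewrite -subr_le0 -(nmulr_rge0 _ hn).
Qed.


Section Step.
Variables (I : finType) (a : I -> R).
Definition cc (p : I * I) (F : I -> R) : R :=
  if (p.1 == p.2) && (a p.1 == 0) then F p.1
  else if (0 < a p.1) && (a p.2 < 0) then - a p.2 * F p.1 + a p.1 * F p.2
  else 0.
Definition cf (p : I * I) (k : I) : R :=
  if (p.1 == p.2) && (a p.1 == 0) then (k == p.1)%:R
  else if (0 < a p.1) && (a p.2 < 0) then - a p.2 * (k == p.1)%:R + a p.1 * (k == p.2)%:R
  else 0.
Lemma sum_cf p F : \sum_k cf p k * F k = cc p F.
Proof.
rewrite /cf /cc; case: ifP => _; first exact: sumd.
case: ifP => _; last by rewrite big1 // => k _; rewrite mul0r.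
rewrite (eq_bigr (fun k => - a p.2 * ((k == p.1)%:R * F k) + a p.1 * ((k == p.2)%:R * F k))).
  by rewrite big_split /= -!mulr_sumr !sumd.
by move=> k _; rewrite mulrDl !mulrA.
Qed.
Lemma cf_ge0 p k : 0 <= cf p k.
Proof.
rewrite /cf; case: ifP => _; first exact: ler0n.
case: ifP => // /andP [h1 h2].
apply: addr_ge0; apply: mulr_ge0 => //; try exact: ler0n.
  by rewrite oppr_ge0 ltW.
by rewrite ltW.
Qed.
Lemma cc_a p : cc p a = 0.
Proof.
rewrite /cc; case: ifP => [/andP [_ /eqP //]|_].
case: ifP => // _; ring.
Qed.
Lemma cc_0 p F : (forall k, F k = 0) -> cc p F = 0.
Proof. by move=> h; rewrite /cc !h; case: ifP => // _; case: ifP => // _; ring. Qed.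
End Step.

Lemma farkasS (V : finType) n : forall (S : {set V}), (#|S| <= n)%N ->
  forall (I : finType) (A : I -> V -> R) (b : I -> R),
  (forall i u, u \notin S -> A i u = 0) -> fk_concl A b.
Proof.
elim: n => [|n IH] S hS I A b hA.
  apply: farkas0 => i u; apply: hA.
  by move: hS; rewrite leqn0 cards_eq0 => /eqP ->; rewrite inE.
case: (set_0Vmem S) => [S0|[v vS]].
  by apply: farkas0 => i u; apply: hA; rewrite S0 inE.
pose a i := A i v.
pose A' (p : I * I) u := cc a p (fun k => A k u).
pose b' (p : I * I) := cc a p b.
have hA' : forall p u, u \notin S :\ v -> A' p u = 0.
  move=> p u; rewrite !inE negb_and negbK => /orP [/eqP -> | hu].
    exact: cc_a.
  by apply: cc_0 => k; apply: hA.
have hS' : (#|S :\ v| <= n)%N.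
  by move: hS; rewrite (cardsD1 v S) vS.
case: (IH _ hS' _ A' b' hA') => [[x' hx']|[l' [hl1 [hl2 hl3]]]].
  pose x0 u := if u == v then 0 else x' u.
  pose r k := \sum_u A k u * x0 u.
  have hr : forall p, cc a p r <= cc a p b.
    move=> p; apply: le_trans (hx' p).
    rewrite le_eqVlt; apply/orP; left; apply/eqP.
    rewrite (eq_bigr (fun u => A' p u * x0 u)); last first.
      move=> u _; rewrite /x0; case: (eqVneq u v) => [->|huv].
        by rewrite /A' cc_a !mul0r.
      by [].
    rewrite /A' -(sum_cf a p r).
    rewrite (eq_bigr (fun u => \sum_k cf a p k * A k u * x0 u)); last first.
      by move=> u _; rewrite -sum_cf mulr_suml.
    rewrite exchange_big /=; apply: eq_bigr => k _.
    by rewrite /r mulr_sumr; apply: eq_bigr => u _; rewrite mulrA.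
  have [t ht] : exists t, forall i, a i * t <= b i - r i.
    apply: oneD.
      move=> i ai0; have := hr (i, i); rewrite /cc /= eqxx ai0 eqxx /=.
      by rewrite subr_ge0.
    move=> i j hi hj; have := hr (i, j); rewrite /cc /=.
    rewrite (gt_eqF hi) andbF hi hj /=; exact: ratio_le.
  left; exists (fun u => if u == v then t else x' u) => i.
  rewrite (bigD1 v) //= eqxx.
  have -> : \sum_(u | u != v) A i u * (if u == v then t else x' u) = r i.
    rewrite /r [RHS](bigD1 v) //= /x0 eqxx mulr0 add0r.
    by apply: eq_bigr => u /negbTE ->.
  by have := ht i; rewrite -/(a i); lra.
right; exists (fun k => \sum_p l' p * cf a p k); split.
  by move=> k; apply: sumr_ge0 => p _; apply: mulr_ge0 => //; exact: cf_ge0.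
have key : forall F : I -> R, \sum_k (\sum_p l' p * cf a p k) * F k = \sum_p l' p * cc a p F.
  move=> F; rewrite (eq_bigr (fun k => \sum_p l' p * cf a p k * F k)); last first.
    by move=> k _; rewrite mulr_suml.
  rewrite exchange_big /=; apply: eq_bigr => p _.
  by rewrite -sum_cf mulr_sumr; apply: eq_bigr => k _; rewrite mulrA.
split; first by move=> u; rewrite key; exact: hl2.
by rewrite key.
Qed.

Lemma farkas (V I : finType) (A : I -> V -> R) (b : I -> R) : fk_concl A b.
Proof. by apply: (@farkasS V #|[set: V]| [set: V]) => // i u; rewrite inE. Qed.

End Farkas.


Section Lin.
Variables (R : realFieldType) (V : finType).
Definition lin (f : (V -> R) -> R) :=
  forall x y k, f (fun v => k * x v + y v) = k * f x + f y.
Lemma lin_ev v : lin (fun x => x v). Proof. by []. Qed.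
Lemma lin_add f g : lin f -> lin g -> lin (fun x => f x + g x).
Proof. by move=> hf hg x y k; rewrite hf hg; ring. Qed.
Lemma lin_opp f : lin f -> lin (fun x => - f x).
Proof. by move=> hf x y k; rewrite hf; ring. Qed.
Lemma lin_sub f g : lin f -> lin g -> lin (fun x => f x - g x).
Proof. by move=> hf hg x y k; rewrite hf hg; ring. Qed.
Lemma lin_scal c f : lin f -> lin (fun x => c * f x).
Proof. by move=> hf x y k; rewrite hf; ring. Qed.
Lemma lin_mulr c f : lin f -> lin (fun x => f x * c).
Proof. by move=> hf x y k; rewrite hf; ring. Qed.
Lemma lin_sum (T : finType) (F : T -> (V -> R) -> R) :
  (forall j, lin (F j)) -> lin (fun x => \sum_j F j x).
Proof.
move=> hF x y k; rewrite (eq_bigr _ (fun j _ => hF j x y k)) big_split /=.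
by rewrite mulr_sumr.
Qed.
Lemma lin0 f : lin f -> f (fun _ => 0) = 0.
Proof.
move=> hf; have := hf (fun _ => 0) (fun _ => 0) 1.
have -> : (fun _ : V => 1 * 0 + 0) = (fun _ => 0 : R).
  by apply: funext => v; rewrite mulr0 addr0.
by rewrite mul1r => h; lra.
Qed.
Lemma lin_repr f : lin f -> forall x,
  f x = \sum_v f (fun u => (u == v)%:R) * x v.
Proof.
move=> hf x.
have ex : x = (fun u => \sum_(v <- index_enum V) x v * (u == v)%:R).
  apply: funext => u; rewrite (bigD1 u) //= eqxx mulr1 big1 ?addr0 //.
  by move=> v /negbTE; rewrite eq_sym => ->; rewrite mulr0.
rewrite [in LHS]ex.
elim: (index_enum V) => [|v s IH].
  rewrite big_nil (_ : (fun u => \sum_(v <- [::]) x v * (u == v)%:R) = fun _ => 0).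
    exact: lin0.
  by apply: funext => u; rewrite big_nil.
rewrite big_cons.
rewrite (_ : (fun u => \sum_(v0 <- v :: s) x v0 * (u == v0)%:R) =
   (fun u => x v * (u == v)%:R + \sum_(v0 <- s) x v0 * (u == v0)%:R)).
  by rewrite hf IH mulrC.
by apply: funext => u; rewrite big_cons.
Qed.
End Lin.


Local Unset Implicit Arguments.
Section Enc.
Variables (R : realType) (N m : nat) (ms : 'I_N -> nat)
  (D : forall t : 'I_N, 'M[R]_(m, ms t)) (a : forall t : 'I_N, 'cV[R]_(ms t)).

Local Notation PiI := {t : 'I_N & ('I_m * 'I_(ms t))%type}.
Local Notation ZI := {t : 'I_N & 'I_(ms t)}.
Local Notation Var := (((('I_m + PiI) + ('I_N * 'I_m)) + ZI) + unit)%type.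
Local Notation Con := (((((PiI + (bool * ('I_N * 'I_m))) + (bool * ZI)) + 'I_m) + PiI) + unit)%type.

Definition sg (s : bool) : R := if s then 1 else -1.
Definition pidx t (i : 'I_m) (j : 'I_(ms t)) : PiI :=
  existT (fun t => ('I_m * 'I_(ms t))%type) t (i, j).
Definition zidx t (j : 'I_(ms t)) : ZI := existT (fun t => 'I_(ms t)) t j.
Definition xw (x : Var -> R) i := x (inl (inl (inl (inl i)))).
Definition xP (x : Var -> R) t i j := x (inl (inl (inl (inr (pidx t i j))))).
Definition xy (x : Var -> R) t i := x (inl (inl (inr (t, i)))).
Definition xz (x : Var -> R) t j := x (inl (inr (zidx t j))).
Definition xth (x : Var -> R) := x (inr tt).

Definition gap (x : Var -> R) : R :=
  \sum_t \sum_i \sum_j xP x t i j * D t i j + xth x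
  + \sum_t \sum_j xz x t j * a t j 0.

Definition lhs (c : Con) (x : Var -> R) : R :=
  match c with
  | inl (inl (inl (inl (inl p)))) => - xP x (tag p) (tagged p).1 (tagged p).2
  | inl (inl (inl (inl (inr q)))) => sg q.1 * (\sum_j xP x q.2.1 q.2.2 j - xw x q.2.2)
  | inl (inl (inl (inr q))) => sg q.1 * (\sum_i xP x (tag q.2) i (tagged q.2))
  | inl (inl (inr i)) => \sum_t xy x t i - xth x
  | inl (inr p) => - xy x (tag p) (tagged p).1 - xz x (tag p) (tagged p).2
  | inr _ => gap x
  end.

Definition bb (c : Con) : R :=
  match c with
  | inl (inl (inl (inr q))) => sg q.1 * a (tag q.2) (tagged q.2) 0
  | inl (inr p) => D (tag p) (tagged p).1 (tagged p).2
  | _ => 0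
  end.

Lemma lin_lhs c : lin (lhs c).
Proof.
case: c => [[[[[p|q]|q]|i]|p]|[]] /=.
- by apply: lin_opp; exact: lin_ev.
- apply: lin_scal; apply: lin_sub; last exact: lin_ev.
  by apply: lin_sum => j; exact: lin_ev.
- by apply: lin_scal; apply: lin_sum => j; exact: lin_ev.
- by apply: lin_sub; [apply: lin_sum => j; exact: lin_ev | exact: lin_ev].
- by apply: lin_sub; [apply: lin_opp; exact: lin_ev | exact: lin_ev].
- rewrite /gap; apply: lin_add; last first.
    by apply: lin_sum => t; apply: lin_sum => j; apply: lin_mulr; exact: lin_ev.
  apply: lin_add; last exact: lin_ev.
  by apply: lin_sum => t; apply: lin_sum => i; apply: lin_sum => j;
     apply: lin_mulr; exact: lin_ev.
Qed.

Lemma sum_unit (F : unit -> R) : \sum_(u : unit) F u = F tt.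
Proof. by rewrite (bigD1 tt) //= big_pred0 ?addr0 // => -[]. Qed.

Lemma sum_bpair (X : finType) (G : bool * X -> R) :
  \sum_q G q = \sum_r (G (true, r) + G (false, r)).
Proof.
transitivity (\sum_(s : bool) \sum_(r : X) G (s, r)).
  by rewrite pair_bigA; apply: eq_bigr => -[].
by rewrite big_bool /= big_split /= addrC.
Qed.

Lemma sum_PiI (G : PiI -> R) :
  \sum_p G p = \sum_t \sum_i \sum_j G (pidx t i j).
Proof.
transitivity (\sum_t \sum_(q : ('I_m * 'I_(ms t))%type) G (existT _ t q)).
  rewrite (sig_big_dep xpredT (fun t => xpredT) (fun t (q : ('I_m * 'I_(ms t))%type) => G (existT _ t q))) /=.
  by apply: eq_bigr => -[t q].
apply: eq_bigr => t _; rewrite pair_bigA /=.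
by apply: eq_bigr => -[i j] _.
Qed.

Lemma sum_ZI (G : ZI -> R) : \sum_q G q = \sum_t \sum_j G (zidx t j).
Proof.
transitivity (\sum_t \sum_(j : 'I_(ms t)) G (existT _ t j)).
  rewrite (sig_big_dep xpredT (fun t => xpredT) (fun t (j : 'I_(ms t)) => G (existT _ t j))) /=.
  by apply: eq_bigr => -[t q].
by [].
Qed.

Lemma sum_pairNm (G : ('I_N * 'I_m)%type -> R) : \sum_q G q = \sum_t \sum_i G (t, i).
Proof. by rewrite pair_bigA; apply: eq_bigr => -[]. Qed.

Lemma sumCon (F : Con -> R) : \sum_c F c =
  \sum_t \sum_i \sum_j F (inl (inl (inl (inl (inl (pidx t i j))))))
  + \sum_t \sum_i (F (inl (inl (inl (inl (inr (true, (t, i)))))))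
                   + F (inl (inl (inl (inl (inr (false, (t, i))))))))
  + \sum_t \sum_j (F (inl (inl (inl (inr (true, zidx t j)))))
                   + F (inl (inl (inl (inr (false, zidx t j))))))
  + \sum_i F (inl (inl (inr i)))
  + \sum_t \sum_i \sum_j F (inl (inr (pidx t i j)))
  + F (inr tt).
Proof.
rewrite !big_sumType /= sum_unit sum_PiI sum_PiI sum_bpair sum_bpair.
by rewrite sum_pairNm sum_ZI.
Qed.

Section Cert.
Variable l : Con -> R.
Definition al t i j := l (inl (inl (inl (inl (inl (pidx t i j)))))).
Definition be t i := l (inl (inl (inl (inl (inr (true, (t, i)))))))
                   - l (inl (inl (inl (inl (inr (false, (t, i))))))).
Definition ga t j := l (inl (inl (inl (inr (true, zidx t j)))))
                   - l (inl (inl (inl (inr (false, zidx t j))))).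
Definition mu i := l (inl (inl (inr i))).
Definition nu t i j := l (inl (inr (pidx t i j))).
Definition ta := l (inr tt).

Lemma E_split X : \sum_c l c * lhs c X =
  \sum_t \sum_i \sum_j al t i j * (- xP X t i j)
  + \sum_t \sum_i be t i * (\sum_j xP X t i j - xw X i)
  + \sum_t \sum_j ga t j * (\sum_i xP X t i j)
  + \sum_i mu i * (\sum_t xy X t i - xth X)
  + \sum_t \sum_i \sum_j nu t i j * (- xy X t i - xz X t j)
  + ta * gap X.
Proof.
rewrite sumCon; congr (_ + _ + _ + _ + _ + _).
- apply: eq_bigr => t _; apply: eq_bigr => i _; rewrite /be /= /sg; ring.
- apply: eq_bigr => t _; apply: eq_bigr => j _; rewrite /ga /= /sg; ring.
Qed.

Lemma B_split : \sum_c l c * bb c =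
  \sum_t \sum_j ga t j * a t j 0 + \sum_t \sum_i \sum_j nu t i j * D t i j.
Proof.
rewrite sumCon.
rewrite [X in X + _ + _ + _ + _ + _]big1; last first.
  by move=> t _; rewrite big1 // => i _; rewrite big1 // => j _; rewrite /= mulr0.
rewrite [X in _ + X + _ + _ + _ + _]big1; last first.
  by move=> t _; rewrite big1 // => i _; rewrite /= !mulr0 addr0.
rewrite [X in _ + _ + _ + X + _ + _]big1; last by move=> i _; rewrite /= mulr0.
rewrite /= mulr0 !addr0 add0r; congr (_ + _).
by apply: eq_bigr => t _; apply: eq_bigr => j _; rewrite /ga /sg; ring.
Qed.
End Cert.

Lemma core_exists : (0 < m)%N -> (forall t i, 0 <= a t i 0) ->
  (forall t, \sum_i a t i 0 = 1) -> exists x, forall c, lhs c x <= bb c.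
Proof.
move=> hm ha0 ha1.
have := farkas (fun c v => lhs c (fun u => (u == v)%:R)) bb.
case=> [[x hx]|[l [hl0 [hl1 hl2]]]].
  by exists x => c; rewrite (lin_repr (lin_lhs c)).
exfalso.
have hE : forall X, \sum_c l c * lhs c X = 0.
  move=> X; rewrite (eq_bigr (fun c => \sum_v l c * lhs c (fun u => (u == v)%:R) * X v)); last first.
    move=> c _; rewrite (lin_repr (lin_lhs c)) mulr_sumr.
    by apply: eq_bigr => v _; rewrite mulrA.
  rewrite exchange_big /= big1 // => v _.
  by rewrite -mulr_suml hl1 mul0r.
suff : 0 <= \sum_c l c * bb c by rewrite leNgt hl2.
have hta : 0 <= ta l by exact: hl0.
case: (ltgtP (ta l) 0) => [|tapos|ta0]; first by rewrite ltNge hta.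
-
  pose Xs : Var -> R := fun v => match v with
    | inl (inl (inl (inl i))) => mu l i
    | inl (inl (inl (inr p))) => l (inl (inr p))
    | inl (inl (inr q)) => be l q.1 q.2
    | inl (inr q) => ga l (tag q) (tagged q)
    | inr _ => 0 end.
  have := hE Xs; rewrite E_split /xP /xw /xy /xz /xth /gap /=.
  set SAN := \sum_t \sum_i \sum_j al l t i j * nu l t i j.
  have hSAN : 0 <= SAN.
    by apply: sumr_ge0 => t _; apply: sumr_ge0 => i _; apply: sumr_ge0 => j _;
       apply: mulr_ge0; apply: hl0.
  set B := \sum_t \sum_i \sum_j nu l t i j * be l t i.
  set C := \sum_t \sum_i \sum_j nu l t i j * ga l t j.
  set Mb := \sum_i mu l i * \sum_t be l t i.
  have e1 : \sum_t \sum_i \sum_j al l t i j * - l (inl (inr (pidx t i j))) = - SAN.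
    rewrite -sumrN; apply: eq_bigr => t _; rewrite -sumrN; apply: eq_bigr => i _.
    by rewrite -sumrN; apply: eq_bigr => j _; rewrite /nu mulrN.
  have e2 : \sum_t \sum_i be l t i * (\sum_j l (inl (inr (pidx t i j))) - mu l i) = B - Mb.
    have -> : Mb = \sum_t \sum_i be l t i * mu l i.
      rewrite /Mb exchange_big /=; apply: eq_bigr => i _; rewrite mulr_sumr.
      by apply: eq_bigr => t _; rewrite mulrC.
    rewrite /B -sumrB; apply: eq_bigr => t _; rewrite -sumrB; apply: eq_bigr => i _.
    by rewrite mulrBr mulr_sumr; congr (_ - _); apply: eq_bigr => j _; rewrite mulrC.
  have e3 : \sum_t \sum_j ga l t j * (\sum_i l (inl (inr (pidx t i j)))) = C.
    rewrite /C; apply: eq_bigr => t _; rewrite exchange_big /=; apply: eq_bigr => j _.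
    by rewrite mulr_sumr; apply: eq_bigr => i _; rewrite mulrC.
  have e4 : \sum_i mu l i * (\sum_t be l t i - 0) = Mb.
    by apply: eq_bigr => i _; rewrite subr0.
  have e5 : \sum_t \sum_i \sum_j nu l t i j * (- be l t i - ga l t j) = - (B + C).
    rewrite /B /C -big_split -sumrN; apply: eq_bigr => t _; rewrite -big_split -sumrN.
    apply: eq_bigr => i _; rewrite -big_split -sumrN; apply: eq_bigr => j _ /=; ring.
  have e6 : \sum_t \sum_i \sum_j l (inl (inr (pidx t i j))) * D t i j
     = \sum_t \sum_i \sum_j nu l t i j * D t i j by [].
  rewrite e1 e2 e3 e4 e5 e6 addr0 => h.
  have h2 : 0 <= ta l * (\sum_t \sum_i \sum_j nu l t i j * D t i j
                       + \sum_t \sum_j ga l t j * a t j 0) by lra.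
  rewrite B_split addrC; move: h2; rewrite pmulr_rge0 //.
-
  pose i0 : 'I_m := Ordinal hm.
  pose Mz := \sum_(p : PiI) `|D (tag p) (tagged p).1 (tagged p).2|.
  pose X0 : Var -> R := fun v => match v with
    | inl (inl (inl (inl i))) => (i == i0)%:R
    | inl (inl (inl (inr p))) => ((tagged p).1 == i0)%:R * a (tag p) (tagged p).2 0
    | inl (inl (inr _)) => 0
    | inl (inr _) => Mz
    | inr _ => 0 end.
  rewrite -(subr0 (\sum_c l c * bb c)) -[X in _ - X](hE X0) -sumrB; apply: sumr_ge0 => c _; rewrite -mulrBr.
  case: c => [[[[[p|q]|q]|i]|p]|[]].
  + apply: mulr_ge0; first exact: hl0.
    rewrite subr_ge0 /= /xP /= oppr_le0; apply: mulr_ge0; [exact: ler0n | exact: ha0].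
  + apply: mulr_ge0; first exact: hl0.
    rewrite subr_ge0 /= /xP /xw /= -mulr_sumr ha1 mulr1 subrr mulr0 //.
  + apply: mulr_ge0; first exact: hl0.
    rewrite subr_ge0 /= /xP /= (sumd i0 (fun _ => a (tag q.2) (tagged q.2) 0)) //.
  + apply: mulr_ge0; first exact: hl0.
    rewrite subr_ge0 /= /xy /xth /= big1_eq subrr //.
  + apply: mulr_ge0; first exact: hl0.
    rewrite subr_ge0 /= /xy /xz /= oppr0 sub0r lerNl.
    apply: (le_trans (_ : _ <= `|D (tag p) (tagged p).1 (tagged p).2|)).
      by rewrite -normrN ler_norm.
    rewrite /Mz (bigD1 p) //= lerDl; apply: sumr_ge0 => *; exact: normr_ge0.
  + by move: ta0; rewrite /ta => ->; rewrite mul0r.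
Qed.

Lemma core_facts x : (forall c, lhs c x <= bb c) ->
  (forall t i j, 0 <= xP x t i j) /\
  (forall t i, \sum_j xP x t i j = xw x i) /\
  (forall t j, \sum_i xP x t i j = a t j 0) /\
  (forall i, \sum_t xy x t i <= xth x) /\
  (forall t i j, 0 <= D t i j + xy x t i + xz x t j) /\
  gap x <= 0.
Proof.
move=> h; split; [|split; [|split; [|split; [|split]]]].
- move=> t i j; have := h (inl (inl (inl (inl (inl (pidx t i j)))))).
  by rewrite /= oppr_le0.
- move=> t i; have h1 := h (inl (inl (inl (inl (inr (true, (t, i))))))).
  have h2 := h (inl (inl (inl (inl (inr (false, (t, i))))))).
  move: h1 h2; rewrite /= /sg; lra.
- move=> t j; have h1 := h (inl (inl (inl (inr (true, zidx t j))))).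
  have h2 := h (inl (inl (inl (inr (false, zidx t j))))).
  move: h1 h2; rewrite /= /sg; lra.
- move=> i; have := h (inl (inl (inr i))); rewrite /=; lra.
- move=> t i j; have := h (inl (inr (pidx t i j))); rewrite /=; lra.
- exact: (h (inr tt)).
Qed.
End Enc.

Set Implicit Arguments.

Section Mx.
Variable R : realType.

Lemma mxdotC p q (X Y : 'M[R]_(p, q)) : mxdot X Y = mxdot Y X.
Proof. by apply: eq_bigr => i _; apply: eq_bigr => j _; rewrite mulrC. Qed.

Lemma mxdotDl p q (X Y Z : 'M[R]_(p, q)) : mxdot (X + Y) Z = mxdot X Z + mxdot Y Z.
Proof.
rewrite /mxdot -big_split; apply: eq_bigr => i _; rewrite -big_split.
by apply: eq_bigr => j _; rewrite mxE mulrDl.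
Qed.

Lemma mxdotNl p q (X Z : 'M[R]_(p, q)) : mxdot (- X) Z = - mxdot X Z.
Proof.
rewrite /mxdot -sumrN; apply: eq_bigr => i _; rewrite -sumrN.
by apply: eq_bigr => j _; rewrite mxE mulNr.
Qed.

Lemma mxdotBl p q (X Y Z : 'M[R]_(p, q)) : mxdot (X - Y) Z = mxdot X Z - mxdot Y Z.
Proof. by rewrite mxdotDl mxdotNl. Qed.

Lemma mxdotBr p q (X Y Z : 'M[R]_(p, q)) : mxdot Z (X - Y) = mxdot Z X - mxdot Z Y.
Proof. by rewrite !(mxdotC Z) mxdotBl. Qed.

Lemma mxdotDr p q (X Y Z : 'M[R]_(p, q)) : mxdot Z (X + Y) = mxdot Z X + mxdot Z Y.
Proof. by rewrite !(mxdotC Z) mxdotDl. Qed.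

Lemma mxdot0r p q (X : 'M[R]_(p, q)) : mxdot X 0 = 0.
Proof. by rewrite /mxdot big1 // => i _; rewrite big1 // => j _; rewrite mxE mulr0. Qed.

Lemma mxdot0l p q (X : 'M[R]_(p, q)) : mxdot 0 X = 0.
Proof. by rewrite mxdotC mxdot0r. Qed.

Lemma mxdot_suml (I : finType) p q (F : I -> 'M[R]_(p, q)) X :
  mxdot (\sum_t F t) X = \sum_t mxdot (F t) X.
Proof.
rewrite /mxdot.
under eq_bigr do under eq_bigr do rewrite summxE mulr_suml.
under eq_bigr do rewrite exchange_big /=.
by rewrite exchange_big.
Qed.

Lemma mxdot_ge0 p q (X Y : 'M[R]_(p, q)) :
  (forall i j, 0 <= X i j) -> (forall i j, 0 <= Y i j) -> 0 <= mxdot X Y.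
Proof.
by move=> hX hY; apply: sumr_ge0 => i _; apply: sumr_ge0 => j _; apply: mulr_ge0.
Qed.

Lemma mxdot_cV p (u w : 'cV[R]_p) : mxdot u w = \sum_i u i 0 * w i 0.
Proof. by apply: eq_bigr => i _; rewrite big_ord1. Qed.

Lemma ones_rowE p k (y : 'cV[R]_p) i j : (y *m (ones R k)^T) i j = y i 0.
Proof. by rewrite !mxE big_ord1 !mxE mulr1. Qed.

Lemma ones_colE p k (z : 'cV[R]_k) i j : (ones R p *m z^T) i j = z j 0.
Proof. by rewrite !mxE big_ord1 !mxE mul1r. Qed.

Lemma mul_onesE p k (X : 'M[R]_(p, k)) i : (X *m ones R k) i 0 = \sum_j X i j.
Proof. by rewrite mxE; apply: eq_bigr => j _; rewrite mxE mulr1. Qed.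

Lemma tr_mul_onesE p k (X : 'M[R]_(p, k)) j : (X^T *m ones R p) j 0 = \sum_i X i j.
Proof. by rewrite mxE; apply: eq_bigr => i _; rewrite !mxE mulr1. Qed.

Lemma Veq p k (V D : 'M[R]_(p, k)) y z :
  V - D - y *m (ones R k)^T - ones R p *m z^T = 0 ->
  forall i j, V i j = D i j + y i 0 + z j 0.
Proof.
move=> h i j; have := congr1 (fun M : 'M[R]_(p, k) => M i j) h.
rewrite /= !(mxE, big_ord1) mulr1 mul1r; lra.
Qed.

Lemma dual_ident p k (V D Pi : 'M[R]_(p, k)) (y : 'cV[R]_p) (z : 'cV[R]_k) :
  (forall i j, V i j = D i j + y i 0 + z j 0) ->
  mxdot D Pi = mxdot V Pi - mxdot y (Pi *m ones R k) - mxdot z (Pi^T *m ones R p).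
Proof.
move=> hV.
rewrite !mxdot_cV.
have -> : \sum_i y i 0 * (Pi *m ones R k) i 0 = \sum_i \sum_j y i 0 * Pi i j.
  by apply: eq_bigr => i _; rewrite mul_onesE mulr_sumr.
have -> : \sum_j z j 0 * (Pi^T *m ones R p) j 0 = \sum_i \sum_j z j 0 * Pi i j.
  rewrite exchange_big /=; apply: eq_bigr => j _.
  by rewrite tr_mul_onesE mulr_sumr.
rewrite /mxdot -!sumrB; apply: eq_bigr => i _; rewrite -!sumrB.
by apply: eq_bigr => j _; rewrite hV; ring.
Qed.

End Mx.

Section Conj.
Variable R : realType.
Local Open Scope ereal_scope.

Lemma indT p q (S : set 'M[R]_(p, q)) X : S X -> indicator S X = 0.
Proof. by move=> h; rewrite /indicator asboolT. Qed.

Lemma indF p q (S : set 'M[R]_(p, q)) X : ~ S X -> indicator S X = +oo.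
Proof. by move=> h; rewrite /indicator asboolF. Qed.

Variable m : nat.

Lemma dot_le_max (u X : 'cV[R]_m) c : (forall i, (u i 0 <= c)%R) -> simplex X ->
  (mxdot u X <= c)%R.
Proof.
move=> hu [hs hp]; rewrite mxdot_cV.
apply: (le_trans (_ : _ <= \sum_i c * X i 0)%R).
  by apply: ler_sum => i _; apply: ler_wpM2r.
by rewrite -mulr_sumr hs mulr1.
Qed.

Lemma conj_ub (u X : 'cV[R]_m) : simplex X -> (mxdot u X)%:E <= delta_simplex_conj u.
Proof.
move=> hX; apply: ereal_sup_ubound; exists X => //.
by rewrite /delta_simplex indT // sube0.
Qed.

Lemma conj_le (u : 'cV[R]_m) c : (forall X, simplex X -> (mxdot u X <= c)%R) ->
  delta_simplex_conj u <= c%:E.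
Proof.
move=> h; apply: ge_ereal_sup => _ [X _ <-].
case: (pselect (simplex X)) => hX.
  by rewrite /delta_simplex indT // sube0 lee_fin; exact: h.
by rewrite /delta_simplex indF //= addeNy leNye.
Qed.

Lemma simplex_unit (i0 : 'I_m) : simplex (delta_mx i0 ord0 : 'cV[R]_m).
Proof.
split; last by move=> i; rewrite mxE; exact: ler0n.
rewrite (bigD1 i0) //= mxE !eqxx /= big1 ?addr0 // => i /negbTE hi.
by rewrite mxE hi.
Qed.

Definition cr (u : 'cV[R]_m) : R := fine (delta_simplex_conj u).

Hypothesis hm : (0 < m)%N.

Lemma conjE u : delta_simplex_conj u = (cr u)%:E.
Proof.
have h1 := conj_ub u (simplex_unit (Ordinal hm)).
have h2 : delta_simplex_conj u <= (\sum_i `|u i 0|)%:E.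
  apply: conj_le => X hX; apply: dot_le_max => // i.
  apply: le_trans (ler_norm _) _.
  by rewrite (bigD1 i) //= lerDl; apply: sumr_ge0 => *; exact: normr_ge0.
rewrite /cr; move: h1 h2; case: (delta_simplex_conj u) => //.
Qed.

Lemma cr_ub u X : simplex X -> (mxdot u X <= cr u)%R.
Proof. by move=> hX; rewrite -lee_fin -conjE; exact: conj_ub. Qed.

Lemma cr_le u c : (forall X, simplex X -> (mxdot u X <= c)%R) -> (cr u <= c)%R.
Proof. by move=> h; rewrite -lee_fin -conjE; exact: conj_le. Qed.

End Conj.

Section Gen.
Variable R : realType.
Local Open Scope ereal_scope.

Lemma mxdot_delta p q (X : 'M[R]_(p, q)) i j : mxdot X (delta_mx i j) = X i j.
Proof.
rewrite /mxdot (bigD1 i) //= (bigD1 j) //= mxE !eqxx mulr1.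
rewrite big1 ?addr0; last by move=> j' /negbTE hj; rewrite mxE eqxx hj mulr0.
rewrite big1 ?addr0 // => i' /negbTE hi; rewrite big1 // => j' _.
by rewrite mxE hi mulr0.
Qed.

Lemma ind_ge0 p q (S : set 'M[R]_(p, q)) X : 0 <= indicator S X.
Proof. by rewrite /indicator; case: asboolP. Qed.

Lemma sub_plus p q (V Pi : 'M[R]_(p, q)) :
  nonneg V -> nonneg Pi -> mxdot Pi V = 0%R -> subdiff (@delta_plus R p q) V (- Pi)%R.
Proof.
move=> hV hP h0; split; first by rewrite /delta_plus indT.
move=> Y; rewrite /delta_plus indT // add0e.
case: (pselect (nonneg Y)) => hY; last by rewrite indF // leey.
rewrite indT // lee_fin mxdotNl mxdotBr h0 subr0 oppr_le0.
exact: mxdot_ge0.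
Qed.

Lemma sum_plus_oo (I : finType) (k : I -> nat) p (Pi : forall t, 'M[R]_(p, k t)) :
  ~ (forall t, nonneg (Pi t)) -> \sum_t @delta_plus R p (k t) (Pi t) = +oo.
Proof.
move=> /existsNP [t ht]; rewrite (bigD1 t) //= /delta_plus indF // addye //.
rewrite gt_eqF // (lt_le_trans ltNy0) //; apply: sume_ge0 => *; exact: ind_ge0.
Qed.

End Gen.

Section Main.
Variables (R : realType) (N m : nat) (ms : 'I_N -> nat)
  (D : forall t : 'I_N, 'M[R]_(m, ms t)) (a : forall t : 'I_N, 'cV[R]_(ms t)).
Hypothesis hm : (0 < m)%N.
Local Open Scope ereal_scope.

Lemma P_obj_in w Pi : simplex w -> (forall t, nonneg (Pi t)) ->
  P_obj D w Pi = (\sum_t mxdot (D t) (Pi t))%:E.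
Proof.
move=> hw hP; rewrite /P_obj /delta_simplex indT // big1; last first.
  by move=> t _; rewrite /delta_plus indT.
by rewrite !add0e sumEFin.
Qed.

Lemma P_obj_out w Pi : ~ (simplex w /\ forall t, nonneg (Pi t)) ->
  P_obj D w Pi = +oo.
Proof.
move=> h; rewrite /P_obj sumEFin.
case: (pselect (simplex w)) => hw.
  rewrite sum_plus_oo; last by move=> hP; apply: h.
  by rewrite /delta_simplex indT // add0e addye.
rewrite /delta_simplex indF // addye ?addye //.
rewrite gt_eqF // (lt_le_trans ltNy0) //; apply: sume_ge0 => *; exact: ind_ge0.
Qed.

Lemma D_obj_in (u : 'cV[R]_m) V z : (forall t, nonneg (V t)) ->
  D_obj a u V z = ((cr u + \sum_t mxdot (z t) (a t))%R)%:E.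
Proof.
move=> hV; rewrite /D_obj (conjE hm) big1; last first.
  by move=> t _; rewrite /delta_plus indT.
by rewrite adde0 sumEFin.
Qed.

Lemma D_obj_out (u : 'cV[R]_m) V z : ~ (forall t, nonneg (V t)) -> D_obj a u V z = +oo.
Proof.
move=> h; rewrite /D_obj (conjE hm) sum_plus_oo // sumEFin.
by rewrite addey // addye.
Qed.

Lemma sumD_ident u V y z w Pi : D_feasible D u V y z -> P_feasible a w Pi ->
  (\sum_t mxdot (D t) (Pi t) = \sum_t mxdot (V t) (Pi t) - mxdot u w
     - \sum_t mxdot (z t) (a t))%R.
Proof.
move=> [hu hV] hP.
have hid : forall t, mxdot (D t) (Pi t) =
   (mxdot (V t) (Pi t) - mxdot (y t) w - mxdot (z t) (a t))%R.
  move=> t; rewrite (dual_ident (Pi t) (Veq (hV t))).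
  by rewrite (hP t).1 (hP t).2.
rewrite (eq_bigr _ (fun t _ => hid t)) !sumrB.
have -> : u = (\sum_t y t)%R by apply/eqP; rewrite eq_sym -subr_eq0 hu.
by rewrite mxdot_suml.
Qed.

Lemma weak u V y z w Pi : D_feasible D u V y z -> (forall t, nonneg (V t)) ->
  P_feasible a w Pi -> simplex w -> (forall t, nonneg (Pi t)) ->
  (0 <= \sum_t mxdot (D t) (Pi t) + cr u + \sum_t mxdot (z t) (a t))%R.
Proof.
move=> hD hV hP hw hPi; rewrite (sumD_ident hD hP).
have h1 : (0 <= \sum_t mxdot (V t) (Pi t))%R.
  by apply: sumr_ge0 => t _; apply: mxdot_ge0; [exact: hV | exact: hPi].
have h2 := cr_ub hm u hw.
lra.
Qed.

End Main.

Section KKT.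
Variables (R : realType) (N m : nat) (ms : 'I_N -> nat)
  (D : forall t : 'I_N, 'M[R]_(m, ms t)) (a : forall t : 'I_N, 'cV[R]_(ms t)).
Hypothesis hm : (0 < m)%N.

Lemma mxdot_const p (X : 'cV[R]_p) c : mxdot X (const_mx c) = c * \sum_i X i 0.
Proof. by rewrite mxdot_cV mulr_sumr; apply: eq_bigr => i _; rewrite mxE mulrC. Qed.

Lemma conj_sub_facts (u lam : 'cV[R]_m) :
  subdiff (@delta_simplex_conj R m) u lam -> simplex lam /\ mxdot u lam = cr u.
Proof.
move=> [_ h].
have hr : forall Y, cr u + mxdot lam (Y - u) <= cr Y.
  by move=> Y; have := h Y; rewrite !(conjE hm) lee_fin.
have h0 : cr u <= mxdot lam u.
  have := hr 0; rewrite mxdotBr mxdot0r sub0r.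
  have : cr (0 : 'cV[R]_m) <= 0 by apply: cr_le => // X _; rewrite mxdot0l.
  lra.
have hc : forall c, c * \sum_i lam i 0 <= c.
  move=> c; have := hr (u + const_mx c).
  have -> : u + const_mx c - u = const_mx c by rewrite addrC addKr.
  have : cr (u + const_mx c) <= cr u + c.
    apply: cr_le => // X hX; rewrite mxdotDl (mxdotC (const_mx c)) mxdot_const hX.1 mulr1.
    by rewrite lerD2r; exact: cr_ub.
  rewrite mxdot_const; lra.
have hs : simplex lam.
  split.
    have := hc 1; have := hc (-1); lra.
  move=> i; have := hr (u - delta_mx i ord0).
  have -> : u - delta_mx i ord0 - u = - delta_mx i ord0 by rewrite addrC addKr.
  have : cr (u - delta_mx i ord0) <= cr u.
    apply: cr_le => // X hX; rewrite mxdotBl (mxdotC (delta_mx i ord0)) mxdot_delta.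
    have := cr_ub hm u hX; have := hX.2 i; lra.
  rewrite (mxdotC lam) mxdotNl (mxdotC (delta_mx i ord0)) mxdot_delta; lra.
split => //.
have := cr_ub hm u hs; rewrite mxdotC in h0; lra.
Qed.

Lemma plus_sub_facts p q (V Lam : 'M[R]_(p, q)) :
  subdiff (@delta_plus R p q) V (- Lam) ->
  [/\ nonneg V, nonneg Lam & mxdot V Lam = 0].
Proof.
move=> [hf h].
have hV : nonneg V.
  apply: contrapT => hV; move: hf; by rewrite /delta_plus indF.
have hL : nonneg Lam.
  move=> i j; have hY : nonneg (V + delta_mx i j).
    move=> i' j'; rewrite !mxE; apply: addr_ge0; [exact: hV | exact: ler0n].
  have := h (V + delta_mx i j); rewrite /delta_plus !indT // add0e lee_fin.
  by rewrite addrC addKr mxdotNl mxdot_delta oppr_le0.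
split => //.
have hY : nonneg (0 : 'M[R]_(p, q)) by move=> i j; rewrite mxE.
have := h 0; rewrite /delta_plus !indT // add0e lee_fin mxdotNl mxdotBr mxdot0r sub0r opprK.
have := mxdot_ge0 hL hV; rewrite mxdotC; lra.
Qed.
End KKT.

Section Opt.
Variables (R : realType) (N m : nat) (ms : 'I_N -> nat)
  (D : forall t : 'I_N, 'M[R]_(m, ms t)) (a : forall t : 'I_N, 'cV[R]_(ms t)).
Hypothesis hm : (0 < m)%N.

Theorem kkt_opt u V y z lam Lam : D_KKT D a u V y z lam Lam ->
  D_optimal D a u V y z /\ P_optimal D a lam Lam.
Proof.
move=> [hc [hu hT]].
have [hs hul] := conj_sub_facts hm hc.
have hVn : forall t, nonneg (V t).
  by move=> t; have [] := plus_sub_facts (hT t).1.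
have hLn : forall t, nonneg (Lam t).
  by move=> t; have [] := plus_sub_facts (hT t).1.
have hVL : forall t, mxdot (V t) (Lam t) = 0.
  by move=> t; have [] := plus_sub_facts (hT t).1.
have hDf : D_feasible D u V y z by split => // t; exact: (hT t).2.2.2.
have hPf : P_feasible a lam Lam by move=> t; split; [exact: (hT t).2.1 | exact: (hT t).2.2.1].
have key : \sum_t mxdot (D t) (Lam t) + cr u + \sum_t mxdot (z t) (a t) = 0.
  rewrite (sumD_ident hDf hPf) big1; last by move=> t _; exact: hVL.
  rewrite hul; ring.
split.
- split => //; split; first by rewrite (D_obj_in a hm).
  move=> u' V' y' z' hf'.
  case: (pselect (forall t, nonneg (V' t))) => hV'.
    rewrite !(D_obj_in a hm) // lee_fin.
    have := weak hm hf' hV' hPf hs hLn; lra.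
  by rewrite (@D_obj_out _ _ _ _ a hm u' V' z') // leey.
- split => //; split; first by rewrite P_obj_in.
  move=> w' Pi' hf'.
  case: (pselect (simplex w' /\ forall t, nonneg (Pi' t))) => [[hw hP]|hn].
    rewrite !P_obj_in // lee_fin.
    have := weak hm hDf hVn hf' hw hP; lra.
  by rewrite (@P_obj_out _ _ _ _ D w' Pi') // leey.
Qed.
End Opt.

Section Exist.
Variables (R : realType) (N m : nat) (ms : 'I_N -> nat)
  (D : forall t : 'I_N, 'M[R]_(m, ms t)) (a : forall t : 'I_N, 'cV[R]_(ms t)).
Hypotheses (hN : (0 < N)%N) (hm : (0 < m)%N) (ha0 : forall t i, 0 <= a t i 0)
  (ha1 : forall t, \sum_i a t i 0 = 1).

Lemma kkt_exists : exists u V y z lam Lam,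
  D_KKT D a u V y z lam Lam /\ P_KKT D a lam Lam y z.
Proof.
have [x hx] := @core_exists _ _ _ _ D a hm ha0 ha1.
have [h1 [h2 [h3 [h4 [h5 h6]]]]] := @core_facts _ _ _ _ D a x hx.
pose w : 'cV[R]_m := \col_i xw R N m ms x i.
pose Pi := fun t => (\matrix_(i, j) xP R N m ms x t i j : 'M[R]_(m, ms t)).
pose y := fun t => (\col_i xy R N m ms x t i : 'cV[R]_m).
pose z := fun t => (\col_j xz R N m ms x t j : 'cV[R]_(ms t)).
pose u := \sum_t y t.
pose V := fun t => D t + y t *m (ones R (ms t))^T + ones R m *m (z t)^T.
have hVE : forall t i j, V t i j = D t i j + xy R N m ms x t i + xz R N m ms x t j.
  by move=> t i j; rewrite /V !(mxE, big_ord1) mulr1 mul1r.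
have hVn : forall t, nonneg (V t) by move=> t i j; rewrite hVE; exact: h5.
have hPn : forall t, nonneg (Pi t) by move=> t i j; rewrite mxE; exact: h1.
have hPf : P_feasible a w Pi.
  move=> t; split; apply/matrixP => i k; rewrite (ord1 k).
    rewrite mul_onesE mxE -(h2 t i); apply: eq_bigr => j _; by rewrite mxE.
  rewrite tr_mul_onesE -(h3 t i); apply: eq_bigr => j _; by rewrite mxE.
have hDf : D_feasible D u V y z.
  split; first by rewrite subrr.
  move=> t; apply/matrixP => i j; rewrite /V !(mxE, big_ord1); ring.
have [t0 _] : exists t0 : 'I_N, true by exists (Ordinal hN).
have hws : simplex w.
  split.
    transitivity (\sum_i \sum_j xP R N m ms x t0 i j).
      by apply: eq_bigr => i _; rewrite mxE h2.
    rewrite exchange_big /=; rewrite -(ha1 t0); apply: eq_bigr => j _; exact: h3.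
  move=> i; rewrite mxE -(h2 t0 i); apply: sumr_ge0 => j _; exact: h1.
have huE : forall i, u i 0 = \sum_t xy R N m ms x t i.
  by move=> i; rewrite summxE; apply: eq_bigr => t _; rewrite mxE.
have hth : mxdot u w <= xth R N m ms x.
  by apply: dot_le_max => // i; rewrite huE; exact: h4.
have hgap : \sum_t mxdot (D t) (Pi t) + xth R N m ms x
            + \sum_t mxdot (z t) (a t) <= 0.
  move: h6; rewrite /gap; congr (_ + _ + _ <= _).
    apply: eq_bigr => t _; apply: eq_bigr => i _; apply: eq_bigr => j _.
    by rewrite mxE mulrC.
  apply: eq_bigr => t _; rewrite mxdot_cV; apply: eq_bigr => j _; by rewrite mxE.
rewrite (sumD_ident hDf hPf) in hgap.
have hVP0 : 0 <= \sum_t mxdot (V t) (Pi t).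
  by apply: sumr_ge0 => t _; apply: mxdot_ge0; [exact: hVn | exact: hPn].
have hVP : forall t, mxdot (V t) (Pi t) = 0.
  have hs0 : \sum_t mxdot (V t) (Pi t) = 0 by lra.
  move=> t; apply: (psumr_eq0P _ hs0) => // t' _.
  by apply: mxdot_ge0; [exact: hVn | exact: hPn].
have hthE : xth R N m ms x = mxdot u w by lra.
have hcr : cr u = mxdot u w.
  apply/eqP; rewrite eq_le; apply/andP; split; last exact: cr_ub.
  apply: cr_le => // X hX; rewrite -hthE; apply: dot_le_max => // i.
  by rewrite huE; exact: h4.
exists u, V, y, z, w, Pi; split.
- split.
    split; first by rewrite (conjE hm).
    move=> Y; rewrite !(conjE hm) lee_fin mxdotBr (mxdotC w u) -hcr.
    have := cr_ub hm Y hws; rewrite (mxdotC Y); lra.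
  split; first by rewrite subrr.
  move=> t; split; last by split; [exact: (hPf t).1 | split; [exact: (hPf t).2 | exact: (hDf.2 t)]].
  by apply: sub_plus => //; rewrite mxdotC.
- split.
    split; first by rewrite /delta_simplex indT.
    move=> Y; rewrite /delta_simplex indT // add0e.
    case: (pselect (simplex Y)) => hY; last by rewrite indF // leey.
    rewrite indT // lee_fin mxdotBr -/u -hcr subr_le0; exact: cr_ub.
  move=> t; split; last exact: hPf t.
  exact: sub_plus.
Qed.
End Exist.


Theorem proposition6 (R : realType) (N m : nat) (ms : 'I_N -> nat)
  (D : forall t : 'I_N, 'M[R]_(m, ms t)) (a : forall t : 'I_N, 'cV[R]_(ms t)) :
  (0 < N)%N -> (0 < m)%N -> (forall t, 0 < ms t)%N ->
  (forall t i, 0 <= a t i 0) -> (forall t, \sum_(i < ms t) a t i 0 = 1) ->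
  [/\ (exists w Pi, P_optimal D a w Pi) /\
      (exists w Pi y z, P_KKT D a w Pi y z),
      (exists u V y z, D_optimal D a u V y z) /\
      (exists u V y z lam Lam, D_KKT D a u V y z lam Lam)
    & forall u V y z lam Lam, D_KKT D a u V y z lam Lam ->
        D_optimal D a u V y z /\ P_optimal D a lam Lam].
Proof.
move=> hN hm _ ha0 ha1.
have [u [V [y [z [lam [Lam [hD hP]]]]]]] := kkt_exists D hN hm ha0 ha1.
have [hDo hPo] := kkt_opt hm hD.
split.
- split; [by exists lam, Lam | by exists lam, Lam, y, z].
- split; [by exists u, V, y, z | by exists u, V, y, z, lam, Lam].
- by move=> u' V' y' z' lam' Lam' h; exact: (kkt_opt hm h).
Qed.
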